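(* Let $(A,\cdot,[-,-])$ be a transposed Poisson algebra and let $\mathcal B$ be a nondegenerate symmetric bilinear form on $A$ which is invariant on $(A,\cdot)$ (i.e. $\mathcal B(x\cdot y,z)=\mathcal B(x,y\cdot z)$ for all $x,y,z$) and is a commutative 2-cocycle on $(A,[-,-])$. Define $\circ$ on $A$ by $\mathcal B(x\circ y,z)=\mathcal B(y,[x,z])$ for all $x,y,z\in A$. Then $(A,\cdot,\circ)$ is an anti-pre-Lie Poisson algebra.
   Context: All vector spaces are finite-dimensional over a field $\mathbb F$ of characteristic $0$. A transposed Poisson algebra is $(A,\cdot,[-,-])$ with $(A,\cdot)$ commutative associative, $(A,[-,-])$ a Lie algebra, and $2z\cdot[x,y]=[z\cdot x,y]+[x,z\cdot y]$ for all $x,y,z$. A commutative 2-cocycle on a Lie algebra is a symmetric bilinear form with $\mathcal B([x,y],z)+\mathcal B([y,z],x)+\mathcal B([z,x],y)=0$. For a bilinear operation $\circ$ write $[x,y]_\circ=x\circ y-y\circ x$; an anti-pre-Lie algebra is $(A,\circ)$ with $x\circ(y\circ z)-y\circ(x\circ z)=[y,x]_\circ\circ z$ and $[x,y]_\circ\circ z+[y,z]_\circ\circ x+[z,x]_\circ\circ y=0$. An anti-pre-Lie Poisson algebra is $(A,\cdot,\circ)$ with $(A,\cdot)$ commutative associative, $(A,\circ)$ anti-pre-Lie, and $2(x\circ y)\cdot z-2(y\circ x)\cdot z=y\cdot(x\circ z)-x\cdot(y\circ z)$, $2x\circ(y\cdot z)=(z\cdot x)\circ y+z\cdot(x\circ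 y)$ for all $x,y,z$. *)

(* Defs.v *)
From HB Require Import structures.
From mathcomp Require Import all_boot all_order all_algebra.
Set Implicit Arguments. Unset Strict Implicit. Unset Printing Implicit Defensive.
Import GRing.Theory.
Local Open Scope ring_scope.

Section Defs.
Variables (F : fieldType) (A : vectType F).

Definition tp_bilinear_op (m : A -> A -> A) : Prop :=
  (forall a x y z, m (a *: x + y) z = a *: m x z + m y z) /\
  (forall a x y z, m z (a *: x + y) = a *: m z x + m z y).

Definition tp_bilinear_form (B : A -> A -> F) : Prop :=
  (forall a x y z, B (a *: x + y) z = a * B x z + B y z) /\
  (forall a x y z, B z (a *: x + y) = a * B z x + B z y).

Definition tp_symmetric_form (B : A -> A -> F) : Prop := forall x y, B x y = B y x.

Definition tp_nondegenerate_form (B : A -> A -> F) : Prop :=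
  forall x, (forall y, B x y = 0) -> x = 0.

Definition tp_commutative_associative (mul : A -> A -> A) : Prop :=
  tp_bilinear_op mul /\ (forall x y, mul x y = mul y x) /\
  (forall x y z, mul (mul x y) z = mul x (mul y z)).

Definition tp_lie_algebra (br : A -> A -> A) : Prop :=
  tp_bilinear_op br /\ (forall x, br x x = 0) /\
  (forall x y z, br x (br y z) + br y (br z x) + br z (br x y) = 0).

Definition tp_transposed_poisson (mul br : A -> A -> A) : Prop :=
  tp_commutative_associative mul /\ tp_lie_algebra br /\
  (forall x y z, 2%:R *: mul z (br x y) = br (mul z x) y + br x (mul z y)).

Definition tp_invariant_form (B : A -> A -> F) (mul : A -> A -> A) : Prop :=
  forall x y z, B (mul x y) z = B x (mul y z).

Definition tp_commutative_2cocycle (B : A -> A -> F) (br : A -> A -> A) : Prop :=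
  tp_symmetric_form B /\
  (forall x y z, B (br x y) z + B (br y z) x + B (br z x) y = 0).

Definition tp_commutator (o : A -> A -> A) (x y : A) : A := o x y - o y x.

Definition tp_anti_pre_lie (o : A -> A -> A) : Prop :=
  tp_bilinear_op o /\
  (forall x y z, o x (o y z) - o y (o x z) = o (tp_commutator o y x) z) /\
  (forall x y z, o (tp_commutator o x y) z + o (tp_commutator o y z) x
                 + o (tp_commutator o z x) y = 0).

Definition tp_anti_pre_lie_poisson (mul o : A -> A -> A) : Prop :=
  tp_commutative_associative mul /\ tp_anti_pre_lie o /\
  (forall x y z, 2%:R *: mul (o x y) z - 2%:R *: mul (o y x) z
                 = mul y (o x z) - mul x (o y z)) /\
  (forall x y z, 2%:R *: o x (mul y z) = o (mul z x) y + mul z (o x y)).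

End Defs.

(* Main.v *)
Require Import Defs.
From HB Require Import structures.
From mathcomp Require Import all_boot all_order all_algebra.
From mathcomp Require Import ring.
Import GRing.Theory.
Local Open Scope ring_scope.
Set Implicit Arguments.

Lemma opDl (F : fieldType) (A : vectType F) (m : A -> A -> A) :
  tp_bilinear_op m -> forall x y z, m (x + y) z = m x z + m y z.
Proof. by move=> [H _] x y z; have := H 1 x y z; rewrite scale1r => ->; rewrite scale1r. Qed.
Lemma opDr (F : fieldType) (A : vectType F) (m : A -> A -> A) :
  tp_bilinear_op m -> forall x y z, m z (x + y) = m z x + m z y.
Proof. by move=> [_ H] x y z; have := H 1 x y z; rewrite scale1r => ->; rewrite scale1r. Qed.
Lemma op0l (F : fieldType) (A : vectType F) (m : A -> A -> A) :
  tp_bilinear_op m -> forall z, m 0 z = 0.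
Proof.
move=> H z; have h := opDl H 0 0 z; rewrite addr0 in h.
have : m 0 z + m 0 z - m 0 z = m 0 z - m 0 z by rewrite -h.
by rewrite addrK subrr.
Qed.
Lemma op0r (F : fieldType) (A : vectType F) (m : A -> A -> A) :
  tp_bilinear_op m -> forall z, m z 0 = 0.
Proof.
move=> H z; have h := opDr H 0 0 z; rewrite addr0 in h.
have : m z 0 + m z 0 - m z 0 = m z 0 - m z 0 by rewrite -h.
by rewrite addrK subrr.
Qed.
Lemma opZl (F : fieldType) (A : vectType F) (m : A -> A -> A) :
  tp_bilinear_op m -> forall a x z, m (a *: x) z = a *: m x z.
Proof. by move=> H a x z; have := H.1 a x 0 z; rewrite !addr0 op0l // addr0. Qed.
Lemma opZr (F : fieldType) (A : vectType F) (m : A -> A -> A) :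
  tp_bilinear_op m -> forall a x z, m z (a *: x) = a *: m z x.
Proof. by move=> H a x z; have := H.2 a x 0 z; rewrite !addr0 op0r // addr0. Qed.
Lemma opNl (F : fieldType) (A : vectType F) (m : A -> A -> A) :
  tp_bilinear_op m -> forall x z, m (- x) z = - m x z.
Proof. by move=> H x z; rewrite -scaleN1r opZl // scaleN1r. Qed.
Lemma opNr (F : fieldType) (A : vectType F) (m : A -> A -> A) :
  tp_bilinear_op m -> forall x z, m z (- x) = - m z x.
Proof. by move=> H x z; rewrite -scaleN1r opZr // scaleN1r. Qed.

Lemma fDl (F : fieldType) (A : vectType F) (m : A -> A -> F) :
  tp_bilinear_form m -> forall x y z, m (x + y) z = m x z + m y z.
Proof. by move=> [H _] x y z; have := H 1 x y z; rewrite scale1r => ->; rewrite mul1r. Qed.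
Lemma fDr (F : fieldType) (A : vectType F) (m : A -> A -> F) :
  tp_bilinear_form m -> forall x y z, m z (x + y) = m z x + m z y.
Proof. by move=> [_ H] x y z; have := H 1 x y z; rewrite scale1r => ->; rewrite mul1r. Qed.
Lemma f0l (F : fieldType) (A : vectType F) (m : A -> A -> F) :
  tp_bilinear_form m -> forall z, m 0 z = 0.
Proof.
move=> H z; have h := fDl H 0 0 z; rewrite addr0 in h.
have : m 0 z + m 0 z - m 0 z = m 0 z - m 0 z by rewrite -h.
by rewrite addrK subrr.
Qed.
Lemma f0r (F : fieldType) (A : vectType F) (m : A -> A -> F) :
  tp_bilinear_form m -> forall z, m z 0 = 0.
Proof.
move=> H z; have h := fDr H 0 0 z; rewrite addr0 in h.
have : m z 0 + m z 0 - m z 0 = m z 0 - m z 0 by rewrite -h.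
by rewrite addrK subrr.
Qed.
Lemma fZl (F : fieldType) (A : vectType F) (m : A -> A -> F) :
  tp_bilinear_form m -> forall a x z, m (a *: x) z = a * m x z.
Proof. by move=> H a x z; have := H.1 a x 0 z; rewrite !addr0 f0l // addr0. Qed.
Lemma fZr (F : fieldType) (A : vectType F) (m : A -> A -> F) :
  tp_bilinear_form m -> forall a x z, m z (a *: x) = a * m z x.
Proof. by move=> H a x z; have := H.2 a x 0 z; rewrite !addr0 f0r // addr0. Qed.
Lemma fNl (F : fieldType) (A : vectType F) (m : A -> A -> F) :
  tp_bilinear_form m -> forall x z, m (- x) z = - m x z.
Proof. by move=> H x z; rewrite -scaleN1r fZl // mulN1r. Qed.
Lemma fNr (F : fieldType) (A : vectType F) (m : A -> A -> F) :
  tp_bilinear_form m -> forall x z, m z (- x) = - m z x.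
Proof. by move=> H x z; rewrite -scaleN1r fZr // mulN1r. Qed.

Lemma lc (R : fieldType) (c1 c2 c3 c4 c5 c6 c7 c8 c9 c10 : R)
  (l r e1 e2 e3 e4 e5 e6 e7 e8 e9 e10 : R) :
  e1 = 0 -> e2 = 0 -> e3 = 0 -> e4 = 0 -> e5 = 0 -> e6 = 0 -> e7 = 0 ->
  e8 = 0 -> e9 = 0 -> e10 = 0 ->
  l - r = c1 * e1 + c2 * e2 + c3 * e3 + c4 * e4 + c5 * e5 + c6 * e6 + c7 * e7
          + c8 * e8 + c9 * e9 + c10 * e10 ->
  l = r.
Proof.
move=> -> -> -> -> -> -> -> -> -> -> h; apply/eqP; rewrite -subr_eq0 h.
by rewrite !mulr0 !addr0.
Qed.
Arguments lc {R} c1 c2 c3 c4 c5 c6 c7 c8 c9 c10 {l r e1 e2 e3 e4 e5 e6 e7 e8 e9 e10}.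

Lemma toz (R : fieldType) (a b : R) : a = b -> a - b = 0.
Proof. by move=> ->; rewrite subrr. Qed.
Arguments toz {R a b}.

Theorem proposition3p46 (F : fieldType) (A : vectType F)
    (charF0 : [pchar F] =i pred0)
    (mul br : A -> A -> A) (B : A -> A -> F) (circ : A -> A -> A) :
  tp_transposed_poisson mul br ->
  tp_bilinear_form B -> tp_symmetric_form B -> tp_nondegenerate_form B ->
  tp_invariant_form B mul -> tp_commutative_2cocycle B br ->
  (forall x y z, B (circ x y) z = B y (br x z)) ->
  tp_anti_pre_lie_poisson mul circ.
Proof.
move=> [[mulbil [mulC mulA]] [[brbil [brxx jac]] tp]] Bbil Bsym Bnd Binv [_ cocy] hc.
have Z : (0 : F) = 0 by [].
have Beq u v : (forall w, B u w = B v w) -> u = v.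
  move=> h; apply/eqP; rewrite -subr_eq0; apply/eqP; apply: Bnd => w.
  by rewrite (fDl Bbil) (fNl Bbil) h subrr.
have brA x y : br x y = - br y x.
  have := brxx (x + y); rewrite (opDl brbil) !(opDr brbil) !brxx add0r addr0.
  by move/eqP; rewrite addr_eq0 => /eqP.
have circbil : tp_bilinear_op circ.
  split=> a x y z; apply: Beq => w.
    by rewrite (fDl Bbil) (fZl Bbil) !hc (opDl brbil) (opZl brbil) (fDr Bbil) (fZr Bbil).
  by rewrite (fDl Bbil) (fZl Bbil) !hc (fDl Bbil) (fZl Bbil).
have comm x y : tp_commutator circ x y = br x y.
  apply: Beq => w; rewrite /tp_commutator (fDl Bbil) (fNl Bbil) !hc.
  have := cocy x y w; rewrite (Bsym (br y w)) (Bsym (br w x)) (brA w x) (fNr Bbil).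
  move=> h; apply: (lc (-1) 0 0 0 0 0 0 0 0 0 h Z Z Z Z Z Z Z Z Z).
  ring.
have coc2 a b t : B (br a b) t + B a (br b t) - B b (br a t) = 0.
  have := cocy a b t; rewrite (Bsym (br b t)) (Bsym (br t a)) (brA t a) (fNr Bbil).
  by [].
have JB a b c d : B a (br b (br c d)) + B a (br c (br d b)) + B a (br d (br b c)) = 0.
  by rewrite -!(fDr Bbil) jac (f0r Bbil).
have two : (2%:R : F) != 0.
  by apply/negP => /(natf0_pchar (isT : (0 < 2)%N)) [p]; rewrite charF0.
split; first by split.
split.
  split=> //; split.
    move=> x y z; rewrite comm; apply: Beq => w.
    rewrite (fDl Bbil) (fNl Bbil) !hc.
    have J := JB z y x w.
    rewrite (brA w y) (opNr brbil) (fNr Bbil) (brA w (br y x)) (fNr Bbil) in J.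
    apply: (lc 1 0 0 0 0 0 0 0 0 0 J Z Z Z Z Z Z Z Z Z); ring.
  move=> x y z; rewrite !comm; apply: Beq => w.
  rewrite !(fDl Bbil) !hc (f0l Bbil).
  rewrite (brA (br x y) w) (brA (br y z) w) (brA (br z x) w) !(fNr Bbil).
  rewrite (brA z x) (opNr brbil) (fNr Bbil).
  have R1 := coc2 x y (br z w).
  have R2 := coc2 x z (br y w).
  have R3 := coc2 x w (br y z).
  have R4 := coc2 y z (br x w).
  have R5 := coc2 y w (br x z).
  have R6 := coc2 z w (br x y).
  rewrite (Bsym (br y z)) in R4.
  rewrite (Bsym (br y w)) in R5.
  rewrite (Bsym (br z w)) in R6.
  have Jx := JB x y z w; rewrite (brA w y) (opNr brbil) (fNr Bbil) in Jx.
  have Jy := JB y x z w; rewrite (brA w x) (opNr brbil) (fNr Bbil) in Jy.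
  have Jz := JB z x y w; rewrite (brA w x) (opNr brbil) (fNr Bbil) in Jz.
  have Jw := JB w x y z; rewrite (brA z x) (opNr brbil) (fNr Bbil) in Jw.
  apply: (mulfI two); rewrite mulr0.
  apply: (lc 1 (-1) (-1) 1 1 (-1) (-1) 1 (-1) (-1) R1 R2 R3 R4 R5 R6 Jx Jy Jz Jw); ring.
split.
  move=> x y z; apply: Beq => w.
  rewrite !(fDl Bbil) !(fNl Bbil) !(fZl Bbil) (mulC y (circ x z)) (mulC x (circ y z)) !Binv !hc.
  rewrite (mulC y w) (brA y (mul x w)) (mulC x w) (fNr Bbil).
  have E1 := coc2 x y (mul z w).
  have E2 : B (br x y) (mul z w) - B z (mul w (br x y)) = 0.
    by rewrite Bsym Binv subrr.
  have E3 := toz (congr1 (B z) (tp x y w)); rewrite (fZr Bbil) (fDr Bbil) in E3.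
  apply: (lc (-2) 2 1 0 0 0 0 0 0 0 E1 E2 E3 Z Z Z Z Z Z Z); ring.
move=> x y z; apply: Beq => w.
rewrite (fZl Bbil) hc (Binv y z) (fDl Bbil) hc (mulC z (circ x y)) Binv hc.
have := congr1 (B y) (tp x w z); rewrite (fZr Bbil) (fDr Bbil).
by [].
Qed.
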